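(* Let $D$ be a positive integer and $p$ a prime with $D>p^2$. Let $f$ be a reduced form of discriminant $-4Dp^2$ whose class in $C(-4Dp^2)$ is derived from the class of $e_{-4D}=(1,0,D)$ in $C(-4D)$, and suppose $f$ is not equivalent to $e_{-4Dp^2}=(1,0,Dp^2)$. Then \[ f=(p^2,\;2pk,\;k^2+D) \] for some integer $k$ with $-p/2\le k\le p/2$.
   Context: A binary quadratic form $(a,b,c)$ means $ax^2+bxy+cy^2$ with $a,b,c\in\mathbb Z$, of discriminant $b^2-4ac$; it is primitive if $\gcd(a,b,c)=1$. Two forms are equivalent if one is obtained from the other by a substitution $(x,y)\mapsto(px+qy,\,sx+ty)$ with integer coefficients and $pt-qs=1$. A form $(a,b,c)$ of negative discriminant is reduced if $|b|\le a\le c$, and $b\ge 0$ whenever $|b|=a$ or $a=c$; every positive definite form is equivalent to a unique reduced form. For $\Delta<0$, $C(\Delta)$ is the class group of equivalence classes of primitive positive definite forms of discriminant $\Delta$ under composition. For a positive integer $r$, a class $f\in C(\Delta r^2)$ is derived from a class $g\in C(\Delta)$ if there exist a representative $g_0$ of $g$ and an integer matrix $\begin{pmatrix}\alpha&\beta\\ \gamma&\delta\end{pmatrix}$ of determinant $r$ such that the form $g_0(\alpha x+\beta y,\gamma x+\delta y)$ lies in the class $f$. *)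

(* Defs.v *)
From mathcomp Require Import all_boot all_order all_algebra.
Set Implicit Arguments. Unset Strict Implicit. Unset Printing Implicit Defensive.
Import Order.TTheory GRing.Theory Num.Theory.
Local Open Scope ring_scope.

(* A binary quadratic form (a,b,c) : a x^2 + b x y + c y^2. *)
Definition bqf := (int * int * int)%type.

Definition bqf_a (f : bqf) : int := f.1.1.
Definition bqf_b (f : bqf) : int := f.1.2.
Definition bqf_c (f : bqf) : int := f.2.

Definition disc (f : bqf) : int := bqf_b f ^+ 2 - 4 * bqf_a f * bqf_c f.

Definition primitive (f : bqf) : Prop :=
  gcdz (gcdz (bqf_a f) (bqf_b f)) (bqf_c f) = 1.

Definition pos_def (f : bqf) : Prop := disc f < 0 /\ 0 < bqf_a f.

(* The form f(al x + be y, ga x + de y). *)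
Definition bqf_subst (f : bqf) (al be ga de : int) : bqf :=
  let a := bqf_a f in let b := bqf_b f in let c := bqf_c f in
  (a * al ^+ 2 + b * al * ga + c * ga ^+ 2,
   2 * a * al * be + b * (al * de + be * ga) + 2 * c * ga * de,
   a * be ^+ 2 + b * be * de + c * de ^+ 2).

Definition bqf_equiv (f g : bqf) : Prop :=
  exists al be ga de : int, al * de - be * ga = 1 /\ bqf_subst f al be ga de = g.

Definition reduced (f : bqf) : Prop :=
  let a := bqf_a f in let b := bqf_b f in let c := bqf_c f in
  `|b| <= a /\ a <= c /\ ((`|b| = a \/ a = c) -> 0 <= b).

(* The class of f (in C(Delta r^2)) is derived from the class of g (in C(Delta)):
   some representative g0 of g and some integer matrix of determinant r
   transform g0 into a form lying in the class of f. *)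
Definition derived_from (r : int) (f g : bqf) : Prop :=
  exists g0 : bqf, bqf_equiv g g0 /\
  exists al be ga de : int, al * de - be * ga = r /\ bqf_equiv (bqf_subst g0 al be ga de) f.

(* Main.v *)
Require Import Defs.
From mathcomp Require Import all_boot all_order all_algebra.
From mathcomp Require Import zify ring lra.
Import Order.TTheory GRing.Theory Num.Theory.
Local Open Scope ring_scope.

Lemma minl (A B C x y : int) : `|B| <= A -> A <= C -> y != 0 -> A <= A*x^+2 + B*x*y + C*y^+2.
Proof.
move=> hB hC /eqP hy.
have hb1 : - A <= B by lia.
have hb2 : B <= A by lia.
have h1 : B * x * y >= - A * `|x*y|.
  rewrite -mulrA. case: (lerP 0 (x*y)) => h.
   rewrite ger0_norm //. nia.
  rewrite ltr0_norm //. nia.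
have h2 : `|x*y| <= x^+2 + y^+2 - 1.
  rewrite normrM. have hy1 : 1 <= `|y| by lia.
  have ex : x^+2 = `|x|^+2 by rewrite real_normK ?num_real.
  have ey : y^+2 = `|y|^+2 by rewrite real_normK ?num_real.
  rewrite ex ey. have := normr_ge0 x. have := normr_ge0 y.
  case: (lerP `|x| `|y|) => hxy; nia.
have hy2 : 1 <= y^+2 by nia.
nia.
Qed.

Lemma subst_comp g a1 b1 c1 d1 a2 b2 c2 d2 :
  bqf_subst (bqf_subst g a1 b1 c1 d1) a2 b2 c2 d2 =
  bqf_subst g (a1*a2+b1*c2) (a1*b2+b1*d2) (c1*a2+d1*c2) (c1*b2+d1*d2).
Proof.
case: g => [[a b] c]; rewrite /bqf_subst /bqf_a /bqf_b /bqf_c /=; congr (_,_,_); ring.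
Qed.

Lemma derived_shape (r D : int) f : derived_from r f (1, 0, D) ->
  exists al be ga de : int, al*de - be*ga = r /\
    f = (al^+2 + D*ga^+2, 2*al*be + 2*D*ga*de, be^+2 + D*de^+2).
Proof.
case=> g0 [[a1 [b1 [c1 [d1 [h1 e1]]]]] [a2 [b2 [c2 [d2 [h2 [a3 [b3 [c3 [d3 [h3 e3]]]]]]]]]]].
subst g0 f. rewrite !subst_comp.
pose A := a1 * a2 + b1 * c2; pose B := a1 * b2 + b1 * d2.
pose C := c1 * a2 + d1 * c2; pose E := c1 * b2 + d1 * d2.
rewrite -/A -/B -/C -/E.
exists (A*a3+B*c3), (A*b3+B*d3), (C*a3+E*c3), (C*b3+E*d3); split.
  have -> : (A * a3 + B * c3) * (C * b3 + E * d3) - (A * b3 + B * d3) * (C * a3 + E * c3)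
    = (a1*d1-b1*c1)*(a2*d2-b2*c2)*(a3*d3-b3*c3) by rewrite /A /B /C /E; ring.
  by rewrite h1 h2 h3 mul1r mulr1.
rewrite /A /B /C /E /bqf_subst /bqf_a /bqf_b /bqf_c /=; congr (_,_,_); ring.
Qed.

Lemma bnd (a b : int) : 0 < `|a| -> `|2*a*b| <= a^+2 -> - `|a| <= 2*b /\ 2*b <= `|a|.
Proof.
move=> ha h.
have : `|2*b| * `|a| <= `|a| * `|a|.
  have e1 : `|2*b| * `|a| = `|2*a*b| by rewrite -normrM mulrAC.
  have e2 : `|a| * `|a| = a^+2 by rewrite -normrM -expr2 ger0_norm // sqr_ge0.
  by rewrite e1 e2.
rewrite ler_pM2r // => h2. lia.
Qed.

Theorem proposition3p1 (D p : nat) (f : bqf) :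
  (0 < D)%N -> prime p -> (p ^ 2 < D)%N ->
  reduced f -> pos_def f -> primitive f ->
  disc f = - 4 * (D%:Z) * (p%:Z) ^+ 2 ->
  derived_from (p%:Z) f (1, 0, D%:Z) ->
  ~ bqf_equiv f (1, 0, D%:Z * (p%:Z) ^+ 2) ->
  exists k : int, - (p%:Z) <= 2 * k /\ 2 * k <= p%:Z /\
    f = ((p%:Z) ^+ 2, 2 * (p%:Z) * k, k ^+ 2 + D%:Z).
Proof.
move=> D0 pr pD red _ _ _ /derived_shape [al [be [ga [de [hdet ef]]]]] neq.
have p2 : (p%:Z)^+2 < D%:Z by move: pD; rewrite -ltz_nat; lia.
subst f. move: red; rewrite /reduced /bqf_a /bqf_b /bqf_c /= => [[hB [hC hS]]].
have [ga0|gan0] := eqVneq ga 0; last first.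
  exfalso.
  have := @minl _ _ _ de (-ga) hB hC; rewrite oppr_eq0 => /(_ gan0).
  have -> : (al ^+ 2 + D%:Z * ga ^+ 2) * de ^+ 2 + (2 * al * be + 2 * D%:Z * ga * de) * de * - ga +
      (be ^+ 2 + D%:Z * de ^+ 2) * (- ga) ^+ 2 = (al*de - be*ga)^+2 by ring.
  rewrite hdet => h.
  have : 1 <= ga^+2 by nia.
  nia.
subst ga. rewrite mulr0 subr0 in hdet.
have hd : (`|al| %| p)%N.
  by apply/dvdnP; exists `|de|%N; rewrite mulnC -abszM hdet.
have pgt1 : (1 < p)%N by apply: prime_gt1.
have pz : 1 < p%:Z by rewrite ltz_nat.
have : (`|al| == 1)%N || (`|al| == p)%N.
  case: (eqVneq `|al|%N 1%N) => h; first by rewrite h.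
  by rewrite (prime_nt_dvdP pr h hd) eqxx orbT.
case/orP=> /eqP ha.
  have hal : `|al| = 1 by rewrite -abszE ha.
  have al2 : al = 1 \/ al = -1 by lia.
  have be0 : be = 0.
    move: hB; rewrite !mulr0 ?mul0r !addr0 ?expr0n /= ?mulr0 ?addr0.
    case: al2 => e; subst al; lia.
  have de2 : de^+2 = p%:Z^+2 by case: al2 => e; subst al; nia.
  exfalso; apply: neq; exists 1, 0, 0, 1; split => //.
  rewrite be0 de2; case: al2 => ->;
  rewrite /bqf_subst /bqf_a /bqf_b /bqf_c /=; congr (_,_,_); ring.
have hal : `|al| = p%:Z by rewrite -abszE ha.
have hB' : `|2 * al * be| <= al ^+ 2.
  by move: hB; rewrite !mulr0 ?mul0r !addr0 ?expr0n /= ?mulr0 ?addr0.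
have [hb1 hb2] : - p%:Z <= 2 * be /\ 2 * be <= p%:Z.
  by rewrite -hal; apply: bnd => //; rewrite hal; lia.
have al2 : al = p%:Z \/ al = - p%:Z by lia.
case: al2 => e; subst al.
  have de1 : de = 1.
    apply: (@mulfI _ (p%:Z)); first by lia.
    by rewrite /= hdet mulr1.
  subst de; exists be; split => //; split => //.
  rewrite ?expr0n /= ?mulr0 ?mul0r ?addr0 ?mulr1 ?expr1n; congr (_,_,_); ring.
have de1 : de = -1.
  apply: (@mulfI _ (- p%:Z)); first by lia.
  by rewrite /= hdet mulrNN mulr1.
subst de; exists (-be); split; [lia|split; [lia|]].
rewrite ?expr0n /= ?mulr0 ?mul0r ?addr0 ?mulr1 ?expr1n; congr (_,_,_); ring.
Qed.
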